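(* Let $\varphi:[0,\infty)\to\mathbb R$ be completely monotone with $\varphi(0)=1$ and $\lim_{x\to\infty}\varphi(x)=0$, and let $0<p\le1$, $D\ge1$. Then the function $\rho:\mathbb R^D\to\mathbb R$, $\rho(\boldsymbol\omega)=\varphi(\|\boldsymbol\omega\|_p^p)$, is positive definite: for every $k\ge1$, every pairwise distinct $\theta_1,\dots,\theta_k\in\mathbb R^D$ and every $\mathbf c\in\mathbb C^k\setminus\{0\}$, $\sum_{\ell,\ell'=1}^k\overline{\mathbf c[\ell]}\,\mathbf c[\ell']\,\varphi(\|\theta_{\ell'}-\theta_\ell\|_p^p)>0$.
   Context: A function $\varphi:[0,\infty)\to\mathbb R$ is completely monotone (CMF) if it is infinitely differentiable on $(0,\infty)$, right-continuous at $0$, and $(-1)^n\varphi^{(n)}(x)\ge0$ for all $x>0$ and all integers $n\ge0$. $\|\theta\|_p^p=\sum_{d=1}^D|\theta[d]|^p$. *)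

(* Defs.v *)
From Stdlib Require Import Reals Lra.
Open Scope R_scope.

(* Completely monotone function phi : [0,oo) -> R (values at x<0 are irrelevant).
   f n is the n-th derivative of phi on (0,oo). *)
Definition CMF (phi : R -> R) : Prop :=
  (exists f : nat -> R -> R,
      (forall x, 0 < x -> f 0%nat x = phi x) /\
      (forall n x, 0 < x -> derivable_pt_lim (f n) x (f (S n) x)) /\
      (forall n x, 0 < x -> 0 <= (-1) ^ n * f n x)) /\
  (forall eps, 0 < eps -> exists delta, 0 < delta /\
      forall x, 0 <= x < delta -> Rabs (phi x - phi 0) < eps).

Fixpoint sumR (n : nat) (f : nat -> R) : R :=
  match n with
  | O => 0
  | S m => sumR m f + f m
  end.

(* |x|^p with the convention 0^p = 0 (p > 0) *)
Definition abspow (x p : R) : R :=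
  if Req_EM_T x 0 then 0 else Rpower (Rabs x) p.

(* vectors of R^D are functions nat -> R, coordinates 0..D-1 *)
Definition pnormp (p : R) (D : nat) (v : nat -> R) : R :=
  sumR D (fun d => abspow (v d) p).

Definition vsub (u v : nat -> R) : nat -> R := fun d => u d - v d.

Record Cplx := mkC { re : R; im : R }.
Definition Cadd (z w : Cplx) := mkC (re z + re w) (im z + im w).
Definition Cmul (z w : Cplx) :=
  mkC (re z * re w - im z * im w) (re z * im w + im z * re w).
Definition Cconj (z : Cplx) := mkC (re z) (- im z).
Definition Cofreal (x : R) := mkC x 0.
Definition C0 := mkC 0 0.
Fixpoint sumC (n : nat) (f : nat -> Cplx) : Cplx :=
  match n with
  | O => C0
  | S m => Cadd (sumC m f) (f m)
  end.

(* z > 0 in C: z is real and positive *)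
Definition Cpos (z : Cplx) : Prop := im z = 0 /\ 0 < re z.

(* Main.v *)
Require Import Defs.
From Stdlib Require Import Reals Lra Lia List Classical FunctionalExtensionality Factorial.
Open Scope R_scope.

Lemma sumR_ext n f g : (forall i, (i < n)%nat -> f i = g i) -> sumR n f = sumR n g.
Proof. induction n; simpl; intros H; auto. rewrite IHn by (intros; apply H; lia). rewrite H by lia; auto. Qed.

Lemma sumR_plus n f g : sumR n (fun i => f i + g i) = sumR n f + sumR n g.
Proof. induction n; simpl; [lra|rewrite IHn; lra]. Qed.

Lemma sumR_scal n c f : sumR n (fun i => c * f i) = c * sumR n f.
Proof. induction n; simpl; [lra|rewrite IHn; lra]. Qed.

Lemma sumR_opp n f : sumR n (fun i => - f i) = - sumR n f.
Proof. induction n; simpl; [lra|rewrite IHn; lra]. Qed.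

Lemma sumR_zero n : sumR n (fun _ => 0) = 0.
Proof. induction n; simpl; [lra|rewrite IHn; lra]. Qed.

Lemma sumR_nonneg n f : (forall i, (i < n)%nat -> 0 <= f i) -> 0 <= sumR n f.
Proof. induction n; simpl; intros H; [lra|]. assert (0 <= f n) by (apply H; lia).
  assert (0 <= sumR n f) by (apply IHn; intros; apply H; lia). lra. Qed.

Lemma sumR_le n f g : (forall i, (i < n)%nat -> f i <= g i) -> sumR n f <= sumR n g.
Proof. induction n; simpl; intros H; [lra|]. assert (f n <= g n) by (apply H; lia).
  assert (sumR n f <= sumR n g) by (apply IHn; intros; apply H; lia). lra. Qed.

Lemma sumR_swap n m (f : nat -> nat -> R) :
  sumR n (fun i => sumR m (fun j => f i j)) = sumR m (fun j => sumR n (fun i => f i j)).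
Proof. induction n; simpl. - rewrite sumR_zero; auto.
  - rewrite IHn. rewrite <- sumR_plus. auto. Qed.

Lemma sumR_single n i (g : nat -> R) : (i < n)%nat ->
  sumR n (fun j => if Nat.eq_dec i j then g j else 0) = g i.
Proof. induction n; intros H; [lia|simpl].
  destruct (Nat.eq_dec i n).
  - subst. rewrite (sumR_ext n _ (fun _ => 0)). rewrite sumR_zero; lra.
    intros j Hj. destruct (Nat.eq_dec n j); [lia|auto].
  - rewrite IHn by lia. lra. Qed.

Lemma sumR_pos n f i : (forall j, (j < n)%nat -> 0 <= f j) -> (i < n)%nat -> 0 < f i -> 0 < sumR n f.
Proof. induction n; intros H Hi Hf; [lia|simpl].
  assert (0 <= f n) by (apply H; lia).
  assert (0 <= sumR n f) by (apply sumR_nonneg; intros; apply H; lia).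
  destruct (Nat.eq_dec i n). subst; lra.
  assert (0 < sumR n f) by (apply IHn; auto; lia). lra. Qed.

Lemma CV_sumR n (u : nat -> nat -> R) (l : nat -> R) :
  (forall i, (i < n)%nat -> Un_cv (fun N => u N i) (l i)) ->
  Un_cv (fun N => sumR n (u N)) (sumR n l).
Proof. induction n; simpl; intros H.
  - intros e He. exists 0%nat. intros. rewrite R_dist_eq. auto.
  - apply CV_plus. apply IHn. intros; apply H; lia. apply H; lia. Qed.

Lemma CV_const c : Un_cv (fun _ => c) c.
Proof. intros e He. exists 0%nat. intros. rewrite R_dist_eq. auto. Qed.

Lemma CV_pow (u : nat -> R) l m : Un_cv u l -> Un_cv (fun N => (u N) ^ m) (l ^ m).
Proof. intros H. induction m; simpl. apply CV_const. apply CV_mult; auto. Qed.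

Lemma CV_ext (u v : nat -> R) l : (forall N, u N = v N) -> Un_cv u l -> Un_cv v l.
Proof. intros E H e He. destruct (H e He) as [N HN]. exists N. intros. rewrite <- E. auto. Qed.

Lemma CV_nonneg (u : nat -> R) l : (forall N, 0 <= u N) -> Un_cv u l -> 0 <= l.
Proof. intros H1 H2. apply (Rle_cv_lim (Un := fun _ => 0) (Vn := u)); auto. apply CV_const. Qed.

Lemma CV_unique (u : nat -> R) l1 l2 : Un_cv u l1 -> Un_cv u l2 -> l1 = l2.
Proof. intros. eapply UL_sequence; eauto. Qed.

Lemma CV_le_eventually (u : nat -> R) l c N0 : (forall N, (N0 <= N)%nat -> c <= u N) -> Un_cv u l -> c <= l.
Proof. intros H1 H2. apply (Rle_cv_lim (Un := fun _ => c) (Vn := fun N => u (N + N0)%nat)).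
  intros; apply H1; lia. apply CV_const.
  intros e He. destruct (H2 e He) as [N HN]. exists N. intros. apply HN. lia. Qed.

Definition QF n (K : nat -> nat -> R) (x : nat -> R) :=
  sumR n (fun i => sumR n (fun j => x i * x j * K i j)).

Lemma QF_ext n K1 K2 x : (forall i j, (i<n)%nat -> (j<n)%nat -> K1 i j = K2 i j) -> QF n K1 x = QF n K2 x.
Proof. intros H. unfold QF. apply sumR_ext; intros. apply sumR_ext; intros. rewrite H; auto. Qed.

Definition lsum (l : list (nat -> R)) (F : (nat -> R) -> R) : R :=
  fold_right (fun v acc => F v + acc) 0 l.

Lemma lsum_app l1 l2 F : lsum (l1 ++ l2) F = lsum l1 F + lsum l2 F.
Proof. induction l1; simpl; [lra|rewrite IHl1; lra]. Qed.

Lemma lsum_map l g F : lsum (map g l) F = lsum l (fun v => F (g v)).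
Proof. induction l; simpl; auto. rewrite IHl; auto. Qed.

Lemma lsum_ext l F G : (forall v, F v = G v) -> lsum l F = lsum l G.
Proof. intros H; induction l; simpl; auto. rewrite IHl, H; auto. Qed.

Lemma lsum_scal l c F : lsum l (fun v => c * F v) = c * lsum l F.
Proof. induction l; simpl; [lra|rewrite IHl; lra]. Qed.

Lemma lsum_flat l1 l2 F : lsum (flat_map (fun v => map (fun w => (fun i => v i * w i)) l2) l1) F
   = lsum l1 (fun v => lsum l2 (fun w => F (fun i => v i * w i))).
Proof. induction l1; simpl; auto. rewrite lsum_app, lsum_map, IHl1. auto. Qed.

Lemma lsum_mult l1 l2 F G : lsum l1 F * lsum l2 G = lsum l1 (fun v => lsum l2 (fun w => F v * G w)).
Proof. induction l1; simpl. lra. rewrite <- IHl1. rewrite Rmult_plus_distr_r. f_equal.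
  rewrite <- lsum_scal. auto. Qed.

Lemma lsum_nonneg l F : (forall v, 0 <= F v) -> 0 <= lsum l F.
Proof. intros H; induction l; simpl; [lra|]. specialize (H a); lra. Qed.

Lemma sumR_lsum n l (F : nat -> (nat -> R) -> R) :
  sumR n (fun i => lsum l (F i)) = lsum l (fun v => sumR n (fun i => F i v)).
Proof. induction n; simpl. induction l; simpl; auto. rewrite <- IHl. lra.
  rewrite IHn. clear IHn. induction l; simpl. lra. rewrite <- IHl. lra. Qed.

Definition Gram n (K : nat -> nat -> R) := exists l : list (nat -> R),
  forall i j, (i < n)%nat -> (j < n)%nat -> K i j = lsum l (fun v => v i * v j).

Lemma Gram_QF n K x : Gram n K -> 0 <= QF n K x.
Proof. intros [l Hl]. unfold QF.
  rewrite (sumR_ext n _ (fun i => lsum l (fun v => sumR n (fun j => x i * v i * (x j * v j))))).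
  rewrite sumR_lsum. apply lsum_nonneg. intros v.
  rewrite (sumR_ext n _ (fun i => (x i * v i) * sumR n (fun j => x j * v j))).
  rewrite (sumR_ext n _ (fun i => sumR n (fun j => x j * v j) * (x i * v i))).
  rewrite sumR_scal. apply Rle_0_sqr. intros; lra. intros. rewrite <- sumR_scal. auto.
  intros i Hi. rewrite <- sumR_lsum. apply sumR_ext. intros j Hj. rewrite Hl by auto.
  rewrite <- lsum_scal. apply lsum_ext. intros; lra. Qed.

Lemma Gram_ext n K1 K2 : (forall i j, (i<n)%nat -> (j<n)%nat -> K1 i j = K2 i j) -> Gram n K1 -> Gram n K2.
Proof. intros H [l Hl]. exists l. intros. rewrite <- H; auto. Qed.

Lemma Gram_plus n K1 K2 : Gram n K1 -> Gram n K2 -> Gram n (fun i j => K1 i j + K2 i j).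
Proof. intros [l1 H1] [l2 H2]. exists (l1 ++ l2). intros. rewrite lsum_app, H1, H2; auto. Qed.

Lemma Gram_mult n K1 K2 : Gram n K1 -> Gram n K2 -> Gram n (fun i j => K1 i j * K2 i j).
Proof. intros [l1 H1] [l2 H2]. exists (flat_map (fun v => map (fun w => (fun i => v i * w i)) l2) l1).
  intros. rewrite lsum_flat, H1, H2 by auto. rewrite lsum_mult. apply lsum_ext; intros.
  apply lsum_ext; intros. lra. Qed.

Lemma Gram_scal n c K : 0 <= c -> Gram n K -> Gram n (fun i j => c * K i j).
Proof. intros Hc [l H]. exists (map (fun v => fun i => sqrt c * v i) l). intros.
  rewrite lsum_map, H by auto. rewrite <- lsum_scal. apply lsum_ext. intros.
  pose proof (sqrt_sqrt c Hc). nra. Qed.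

Lemma Gram_one n : Gram n (fun _ _ => 1).
Proof. exists ((fun _ => 1) :: nil). intros. simpl. lra. Qed.

Lemma Gram_zero n : Gram n (fun _ _ => 0).
Proof. exists nil. intros. simpl. auto. Qed.

Lemma Gram_pow n K m : Gram n K -> Gram n (fun i j => (K i j) ^ m).
Proof. intros H. induction m; simpl. apply Gram_one. apply Gram_mult; auto. Qed.

Lemma Gram_sumR n N (K : nat -> nat -> nat -> R) : (forall c, (c < N)%nat -> Gram n (K c)) ->
  Gram n (fun i j => sumR N (fun c => K c i j)).
Proof. induction N; simpl; intros H. apply Gram_zero. apply Gram_plus. apply IHN; intros; apply H; lia. apply H; lia. Qed.

Lemma Gram_rank1 n (v : nat -> R) : Gram n (fun i j => v i * v j).
Proof. exists (v :: nil). intros; simpl; lra. Qed.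

Fixpoint cnt (n : nat) (s : nat -> R) : nat :=
  match n with O => O | S m => (cnt m s + if Rlt_dec 0 (s m) then 1 else 0)%nat end.

Lemma cnt_le n s s' : (forall i, (i<n)%nat -> 0 < s' i -> 0 < s i) -> (cnt n s' <= cnt n s)%nat.
Proof. induction n; simpl; intros H; auto.
  assert (cnt n s' <= cnt n s)%nat by (apply IHn; intros; apply H; auto; lia).
  destruct (Rlt_dec 0 (s' n)); destruct (Rlt_dec 0 (s n)); try lia.
  exfalso. apply n0. apply H; auto; lia. Qed.

Lemma cnt_lt n s s' i0 : (forall i, (i<n)%nat -> 0 < s' i -> 0 < s i) -> (i0 < n)%nat ->
  0 < s i0 -> ~ 0 < s' i0 -> (cnt n s' < cnt n s)%nat.
Proof. induction n; simpl; intros H Hi H1 H2; [lia|].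
  destruct (Nat.eq_dec i0 n).
  - subst. assert (cnt n s' <= cnt n s)%nat by (apply cnt_le; intros; apply H; auto; lia).
    destruct (Rlt_dec 0 (s' n)); destruct (Rlt_dec 0 (s n)); try lia; tauto.
  - assert (cnt n s' < cnt n s)%nat by (apply IHn; auto; try lia; intros; apply H; auto; lia).
    destruct (Rlt_dec 0 (s' n)); destruct (Rlt_dec 0 (s n)); try lia.
    exfalso. apply n1. apply H; auto; lia. Qed.

Lemma cnt_zero n s : cnt n s = 0%nat -> forall i, (i < n)%nat -> ~ 0 < s i.
Proof. induction n; simpl; intros H i Hi; [lia|].
  destruct (Rlt_dec 0 (s n)); [lia|]. destruct (Nat.eq_dec i n). subst; auto.
  apply IHn; auto; lia. Qed.

Lemma cnt_pos n s : (0 < cnt n s)%nat -> exists i, (i < n)%nat /\ 0 < s i.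
Proof. induction n; simpl; intros H; [lia|].
  destruct (Rlt_dec 0 (s n)). exists n; split; auto.
  destruct IHn as [i [Hi Hs]]. lia. exists i; split; auto. Qed.

Lemma min_pos n s : (exists i, (i < n)%nat /\ 0 < s i) ->
  exists i0, (i0 < n)%nat /\ 0 < s i0 /\ forall j, (j < n)%nat -> 0 < s j -> s i0 <= s j.
Proof. induction n; intros [i [Hi Hs]]; [lia|].
  destruct (classic (exists i, (i < n)%nat /\ 0 < s i)) as [Hex|Hnex].
  - destruct (IHn Hex) as [i0 [H0 [H1 H2]]].
    destruct (Rle_dec (s i0) (s n)).
    + exists i0. repeat split; auto. intros j Hj Hsj. destruct (Nat.eq_dec j n). subst; auto. apply H2; auto; lia.
    + destruct (Rlt_dec 0 (s n)).
      * exists n. repeat split; auto. intros j Hj Hsj. destruct (Nat.eq_dec j n). subst; lra.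
        assert (s i0 <= s j) by (apply H2; auto; lia). lra.
      * exists i0. repeat split; auto. intros j Hj Hsj. destruct (Nat.eq_dec j n). subst; lra. apply H2; auto; lia.
  - exists n. assert (i = n). { destruct (Nat.eq_dec i n); auto. exfalso; apply Hnex. exists i; split; auto; lia. }
    subst. repeat split; auto. intros j Hj Hsj. destruct (Nat.eq_dec j n). subst; lra.
    exfalso; apply Hnex. exists j; split; auto; lia.
Qed.

Lemma Gram_min_aux n m : forall s, (forall i, (i<n)%nat -> 0 <= s i) -> (cnt n s <= m)%nat ->
  Gram n (fun i j => Rmin (s i) (s j)).
Proof. induction m; intros s Hs Hc.
  - apply (Gram_ext n (fun _ _ => 0)). intros i j Hi Hj.
    assert (~ 0 < s i) by (apply (cnt_zero n); auto; lia).
    assert (~ 0 < s j) by (apply (cnt_zero n); auto; lia).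
    assert (0 <= s i) by auto. assert (0 <= s j) by auto.
    assert (s i = 0) by lra. assert (s j = 0) by lra. rewrite H3, H4. unfold Rmin. destruct Rle_dec; lra.
    apply Gram_zero.
  - destruct (Nat.eq_dec (cnt n s) 0).
    + apply IHm; auto; lia.
    + destruct (min_pos n s) as [i0 [Hi0 [Hp Hm]]]. apply cnt_pos; lia.
      set (mu := s i0).
      set (ind := fun i => if Rlt_dec 0 (s i) then 1 else 0).
      set (s' := fun i => if Rlt_dec 0 (s i) then s i - mu else 0).
      apply (Gram_ext n (fun i j => mu * (ind i * ind j) + Rmin (s' i) (s' j))).
      * intros i j Hi Hj. unfold ind, s'.
        assert (Hmi := Hm i Hi). assert (Hmj := Hm j Hj). assert (Hsi := Hs i Hi). assert (Hsj := Hs j Hj).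
        destruct (Rlt_dec 0 (s i)); destruct (Rlt_dec 0 (s j)); unfold Rmin;
        repeat destruct Rle_dec; try (specialize (Hmi r)); try (specialize (Hmj r0)); try specialize (Hmj r); unfold mu in *; nra.
      * apply Gram_plus. apply Gram_scal. unfold mu; lra. apply Gram_rank1.
        apply IHm.
        -- intros i Hi. unfold s'. destruct (Rlt_dec 0 (s i)). assert (Hmi := Hm i Hi r). unfold mu; lra. lra.
        -- assert (cnt n s' < cnt n s)%nat; [|lia].
           apply (cnt_lt n s s' i0); auto.
           intros i Hi. unfold s'. destruct (Rlt_dec 0 (s i)); auto. lra.
           unfold s'. destruct (Rlt_dec 0 (s i0)). unfold mu; lra. lra.
Qed.

Lemma Gram_min n s : (forall i, (i<n)%nat -> 0 <= s i) -> Gram n (fun i j => Rmin (s i) (s j)).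
Proof. intros. apply (Gram_min_aux n (cnt n s)); auto. Qed.

Lemma abs_betw x B : Rabs x <= B -> - B <= x <= B.
Proof. unfold Rabs; destruct Rcase_abs; lra. Qed.

Lemma Gram_abs n (t : nat -> R) B L : (forall i, (i<n)%nat -> Rabs (t i) <= B) -> 2 * B <= L ->
  Gram n (fun i j => L - Rabs (t i - t j)).
Proof. intros Hb HL.
  apply (Gram_ext n (fun i j => Rmin (t i + B) (t j + B) + Rmin (L - (t i + B)) (L - (t j + B)))).
  - intros i j Hi Hj. assert (Hbi := Hb i Hi). assert (Hbj := Hb j Hj).
    apply abs_betw in Hbi. apply abs_betw in Hbj.
    unfold Rmin; repeat destruct Rle_dec; unfold Rabs; destruct Rcase_abs; lra.
  - apply Gram_plus; apply Gram_min; intros i Hi; assert (Hbi := Hb i Hi);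
    apply abs_betw in Hbi; lra.
Qed.

Lemma dpl_ext f g x l l' : (forall y, f y = g y) -> l = l' -> derivable_pt_lim f x l -> derivable_pt_lim g x l'.
Proof. intros H E. subst. replace g with f; auto. apply functional_extensionality; auto. Qed.

Lemma dpl_mult f g x lf lg : derivable_pt_lim f x lf -> derivable_pt_lim g x lg ->
  derivable_pt_lim (fun y => f y * g y) x (lf * g x + f x * lg).
Proof. intros. apply (derivable_pt_lim_mult f g); auto. Qed.

Lemma dpl_plus f g x lf lg : derivable_pt_lim f x lf -> derivable_pt_lim g x lg ->
  derivable_pt_lim (fun y => f y + g y) x (lf + lg).
Proof. intros. apply (derivable_pt_lim_plus f g); auto. Qed.

Lemma dpl_const c x : derivable_pt_lim (fun _ => c) x 0.
Proof. apply (derivable_pt_lim_const c). Qed.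

Lemma dpl_powlin c k s : derivable_pt_lim (fun s => (c - s)^k) s (- (INR k * (c - s)^(pred k))).
Proof.
  assert (H1 : derivable_pt_lim (fun s => c - s) s (0 - 1)).
  { apply (derivable_pt_lim_minus (fct_cte c) id). apply derivable_pt_lim_const. apply derivable_pt_lim_id. }
  assert (H2 := derivable_pt_lim_pow (c - s) k).
  assert (H3 := derivable_pt_lim_comp (fun s => c - s) (fun y => y ^ k) s _ _ H1 H2).
  eapply dpl_ext; [| |exact H3]. intros; reflexivity. ring. Qed.

Lemma decr_lemma F F' u v : u <= v -> (forall s, u <= s <= v -> derivable_pt_lim F s (F' s)) ->
  (forall s, u <= s <= v -> F' s <= 0) -> F v <= F u.
Proof. intros Huv Hd Hn. destruct (Req_dec u v). subst; lra.
  destruct (MVT_cor2 F F' u v) as [c [E Hc]]. lra. auto.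
  assert (F' c <= 0) by (apply Hn; lra). nra. Qed.

Section Taylor.
Variable f : nat -> R -> R.
Variable a : R.
Hypothesis Ha : 0 < a.
Hypothesis Hd : forall n t, 0 < t -> derivable_pt_lim (f n) t (f (S n) t).
Hypothesis Hs : forall n t, 0 < t <= a -> 0 <= (-1) ^ n * f n t.

Definition coef k := (-1) ^ k * f k a / INR (fact k).
Definition Tay n x := sumR n (fun k => coef k * (a - x) ^ k).
Definition Hf x n s := sumR n (fun k => f k s * (x - s) ^ k / INR (fact k)).

Lemma coef_nonneg k : 0 <= coef k.
Proof. unfold coef. apply Rmult_le_pos. apply Hs; lra. left; apply Rinv_0_lt_compat.
  apply lt_0_INR. apply lt_O_fact. Qed.

Lemma Tay_nonneg n x : x <= a -> 0 <= Tay n x.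
Proof. intros. unfold Tay. apply sumR_nonneg. intros. apply Rmult_le_pos. apply coef_nonneg.
  apply pow_le. lra. Qed.

Lemma Hf_deriv x n s : 0 < s ->
  derivable_pt_lim (Hf x (S n)) s (f (S n) s * (x - s) ^ n / INR (fact n)).
Proof. intros Hs0. induction n.
  - unfold Hf. simpl. eapply dpl_ext; [| |apply (Hd 0 s Hs0)]. intros; simpl; field. simpl; field.
  - unfold Hf. simpl sumR.
    assert (E : forall y, sumR (S n) (fun k => f k y * (x - y) ^ k / INR (fact k)) + f (S n) y * (x - y) ^ S n / INR (fact (S n))
      = Hf x (S n) y + f (S n) y * ((x - y) ^ S n * / INR (fact (S n)))).
    { intros; unfold Hf. change (fact (S n)) with (fact (S n)). rewrite fact_simpl, mult_INR.
      assert (INR (fact n) <> 0) by apply INR_fact_neq_0.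
      assert (INR (S n) <> 0) by (apply not_0_INR; lia). simpl sumR. field. auto. }
    eapply dpl_ext; [intros; symmetry; apply E| |].
    2:{ apply dpl_plus. apply IHn. apply dpl_mult. apply Hd; auto.
        apply dpl_mult. apply dpl_powlin. apply dpl_const. }
    simpl pred. rewrite fact_simpl, mult_INR. simpl ((x - s) ^ S n).
    assert (INR (fact n) <> 0) by apply INR_fact_neq_0.
    assert (INR (S n) <> 0) by (apply not_0_INR; lia).
    field. auto.
Qed.

Lemma Hf_at x n : (0 < n)%nat -> Hf x n x = f 0 x.
Proof. intros H. induction n; [lia|]. unfold Hf in *. simpl sumR.
  destruct n. simpl. field. rewrite IHn by lia. replace (x - x) with 0 by ring.
  rewrite pow_i by lia. field. apply INR_fact_neq_0. Qed.

Lemma Hf_a x n : Hf x n a = Tay n x.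
Proof. unfold Hf, Tay, coef. apply sumR_ext. intros k _.
  replace (x - a) with ((-1) * (a - x)) by ring. rewrite Rpow_mult_distr. field. apply INR_fact_neq_0. Qed.

Lemma sign_aux m s x : 0 < s <= a -> x <= s ->
  f (S m) s * (x - s) ^ m = - ((-1) ^ (S m) * f (S m) s) * (s - x) ^ m.
Proof. intros. replace (x - s) with ((-1) * (s - x)) by ring. rewrite Rpow_mult_distr. simpl. ring_simplify.
  replace ((-1)^m * (-1)^m) with 1. ring. rewrite <- Rpow_mult_distr. replace (-1 * -1) with 1 by ring. rewrite pow1; auto.
Qed.

Lemma Hf_decr x m u v : 0 < u -> u <= v -> v <= a -> x <= u -> Hf x (S m) v <= Hf x (S m) u.
Proof. intros. apply (decr_lemma _ (fun s => f (S m) s * (x - s) ^ m / INR (fact m))); auto.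
  intros; apply Hf_deriv; lra.
  intros s Hs0. unfold Rdiv. rewrite sign_aux by lra.
  assert (0 <= (-1) ^ S m * f (S m) s) by (apply Hs; lra).
  assert (0 <= (s - x) ^ m) by (apply pow_le; lra).
  assert (0 < / INR (fact m)) by (apply Rinv_0_lt_compat, lt_0_INR, lt_O_fact).
  assert (0 <= (-1) ^ S m * f (S m) s * (s - x) ^ m) by nra. nra. Qed.

Lemma R1 n x : 0 < x <= a -> Tay n x <= f 0 x.
Proof. intros Hx. destruct n. unfold Tay; simpl. assert (H := Hs 0 x Hx). simpl in H; lra.
  rewrite <- Hf_a. rewrite <- (Hf_at x (S n)) by lia. apply Hf_decr; lra. Qed.

Lemma R2 m x y : 0 < y -> y < x -> x <= a ->
  f 0 x - Tay (S m) x <= ((a - x) / (a - y)) ^ m * (f 0 y - Tay (S m) y).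
Proof. intros Hy Hyx Hxa. set (r := (a - x) / (a - y)).
  assert (Hr : 0 <= r). { unfold r. apply Rmult_le_pos. lra. left; apply Rinv_0_lt_compat; lra. }
  assert (Hrm : 0 <= r ^ m) by (apply pow_le; auto).
  set (P := fun s => r ^ m * Hf y (S m) s - Hf x (S m) s).
  assert (HP : P a <= P x).
  { apply (decr_lemma P (fun s => r ^ m * (f (S m) s * (y - s) ^ m / INR (fact m)) - f (S m) s * (x - s) ^ m / INR (fact m))); auto.
    - intros s Hs0. unfold P. apply (derivable_pt_lim_minus (fun s => r ^ m * Hf y (S m) s) (Hf x (S m))).
      apply (derivable_pt_lim_scal (Hf y (S m)) (r ^ m)). apply Hf_deriv; lra. apply Hf_deriv; lra.
    - intros s Hs0. unfold Rdiv. rewrite !sign_aux by lra.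
      assert (G : 0 <= (-1) ^ S m * f (S m) s) by (apply Hs; lra).
      assert (0 < / INR (fact m)) by (apply Rinv_0_lt_compat, lt_0_INR, lt_O_fact).
      assert ((s - x) ^ m <= r ^ m * (s - y) ^ m).
      { rewrite <- Rpow_mult_distr. apply pow_incr. split. lra. unfold r.
        assert (E : r * (s - y) - (s - x) = (a - s) * (x - y) / (a - y)) by (unfold r; field; lra).
        assert (0 <= (a - s) * (x - y) / (a - y)). { apply Rmult_le_pos. nra. left; apply Rinv_0_lt_compat; lra. }
        fold r. lra. }
      set (G' := (-1) ^ S m * f (S m) s) in *. set (I := / INR (fact m)) in *.
      assert (0 <= G' * I) by nra.
      replace (r ^ m * (- G' * (s - y) ^ m * I) - - G' * (s - x) ^ m * I)
        with (G' * I * ((s - x) ^ m - r ^ m * (s - y) ^ m)) by ring. nra. }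
  unfold P in HP.
  assert (Hyy : Hf y (S m) x <= Hf y (S m) y) by (apply Hf_decr; lra).
  rewrite <- !Hf_a. rewrite <- (Hf_at x (S m)) at 1 by lia. rewrite <- (Hf_at y (S m)) by lia. nra.
Qed.

Lemma Tay_cv x : 0 < x <= a -> Un_cv (fun n => Tay n x) (f 0 x).
Proof. intros Hx e He.
  set (y := x / 2). set (r := (a - x) / (a - y)).
  assert (Hr : 0 <= r < 1). { unfold r, y. split. apply Rmult_le_pos. lra. left; apply Rinv_0_lt_compat; lra.
     apply (Rmult_lt_reg_r (a - x/2)). lra. unfold Rdiv. rewrite Rmult_assoc, Rinv_l by lra. lra. }
  assert (Hf0 : 0 <= f 0 y). { assert (H := Hs 0 y). simpl in H. unfold y in *. assert (0 <= 1 * f 0 (x/2)) by (apply H; lra). lra. }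
  destruct (pow_lt_1_zero r ltac:(rewrite Rabs_right; lra) (e / (f 0 y + 1))) as [N HN].
  apply Rdiv_lt_0_compat; lra.
  exists (S N). intros n Hn. destruct n; [lia|].
  assert (H1 := R2 n x y ltac:(unfold y; lra) ltac:(unfold y; lra) ltac:(lra)).
  assert (H2 := R1 (S n) x Hx).
  assert (H3 := Tay_nonneg (S n) y ltac:(unfold y; lra)).
  assert (H4 := HN n ltac:(lia)). rewrite Rabs_right in H4 by (apply Rle_ge, pow_le; lra).
  fold r in H1. unfold R_dist. rewrite Rabs_left1 by lra.
  assert (0 <= r ^ n) by (apply pow_le; lra).
  assert (r ^ n * (f 0 y - Tay (S n) y) <= r ^ n * f 0 y) by nra.
  assert (r ^ n * f 0 y < e).
  { apply (Rmult_lt_compat_r (f 0 y + 1)) in H4; [|lra]. unfold Rdiv in H4.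
    rewrite Rmult_assoc, Rinv_l in H4 by lra. nra. }
  lra.
Qed.

Lemma Tay_cont n : continuity_pt (Tay n) 0.
Proof. apply derivable_continuous_pt. induction n.
  - exists 0. unfold Tay; simpl. apply (derivable_pt_lim_const 0).
  - destruct IHn as [l Hl]. eexists. unfold Tay. simpl sumR.
    apply (dpl_plus (Tay n) (fun x => coef n * (a - x) ^ n)). apply Hl.
    apply (dpl_mult (fun _ => coef n)). apply dpl_const. apply dpl_powlin.
Qed.

Lemma Tay_mono n x : 0 <= x <= a -> Tay n x <= Tay n 0.
Proof. intros. unfold Tay. apply sumR_le. intros. apply Rmult_le_compat_l. apply coef_nonneg.
  apply pow_incr. lra. Qed.

Variable F0 : R.
Hypothesis Hc : forall eps, 0 < eps -> exists delta, 0 < delta /\ forall x, 0 < x < delta -> Rabs (f 0 x - F0) < eps.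

Lemma Tay0_le n : Tay n 0 <= F0.
Proof. destruct (Rle_dec (Tay n 0) F0) as [|Hn]; auto. exfalso.
  set (e := (Tay n 0 - F0) / 2).
  destruct (Hc e ltac:(unfold e; lra)) as [d1 [Hd1 H1]].
  destruct (Tay_cont n e ltac:(unfold e; lra)) as [d2 [Hd2 H2]].
  set (x := Rmin (Rmin d1 d2) a / 2).
  assert (0 < Rmin (Rmin d1 d2) a) by (repeat apply Rmin_glb_lt; lra).
  assert (Rmin (Rmin d1 d2) a <= d1) by (eapply Rle_trans; apply Rmin_l).
  assert (Rmin (Rmin d1 d2) a <= d2) by (eapply Rle_trans; [apply Rmin_l|apply Rmin_r]).
  assert (Rmin (Rmin d1 d2) a <= a) by apply Rmin_r.
  specialize (H1 x ltac:(unfold x; lra)).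
  specialize (H2 x ltac:(split; [split; [exact I| unfold x; lra] | simpl; unfold R_dist, x; rewrite Rminus_0_r, Rabs_right; lra])).
  simpl in H2.
  assert (H5 := R1 n x ltac:(unfold x; lra)).
  unfold R_dist in H2. apply Rabs_def2 in H1. apply Rabs_def2 in H2. unfold e in *. lra.
Qed.

Lemma Tay0_cv : Un_cv (fun n => Tay n 0) F0.
Proof. intros e He.
  destruct (Hc (e/2) ltac:(lra)) as [d1 [Hd1 H1]].
  set (x := Rmin d1 a / 2).
  assert (0 < Rmin d1 a) by (apply Rmin_glb_lt; lra).
  assert (Rmin d1 a <= d1) by apply Rmin_l. assert (Rmin d1 a <= a) by apply Rmin_r.
  specialize (H1 x ltac:(unfold x; lra)). apply Rabs_def2 in H1.
  destruct (Tay_cv x ltac:(unfold x; lra) (e/2) ltac:(lra)) as [N HN].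
  exists N. intros n Hn. specialize (HN n Hn). unfold R_dist in *. apply Rabs_def2 in HN.
  assert (Tay n x <= Tay n 0) by (apply Tay_mono; unfold x; lra).
  assert (Tay n 0 <= F0) by apply Tay0_le.
  rewrite Rabs_left1 by lra. lra. Qed.

End Taylor.

Lemma deriv_zero_loc g b t : (forall y, b < y -> g y = 0) -> b < t -> derivable_pt_lim g t 0.
Proof. intros H Ht e He. exists (mkposreal (t - b) ltac:(lra)). intros h Hh Hh2. simpl in Hh2.
  rewrite !H. replace ((0 - 0) / h - 0) with 0 by (field; auto). rewrite Rabs_R0; auto. lra.
  apply Rabs_def2 in Hh2. lra. Qed.

Lemma sum_pow2 m : sumR m (fun j => 2 ^ j) = 2 ^ m - 1.
Proof. induction m; simpl; [lra|rewrite IHm; lra]. Qed.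

Lemma cv_eventually_const (u : nat -> R) l m : Un_cv u l -> (forall n, (m <= n)%nat -> u n = u m) -> u m = l.
Proof. intros H E. destruct (Req_dec (u m) l); auto. exfalso.
  destruct (H (Rabs (u m - l)) ltac:(apply Rabs_pos_lt; lra)) as [N HN].
  specialize (HN (N + m)%nat ltac:(lia)). unfold R_dist in HN. rewrite E in HN by lia. lra. Qed.

Lemma Tay_term f a n x : (forall k, 0 <= coef f a k) -> x <= a -> (n < n + 1)%nat ->
  coef f a n * (a - x) ^ n <= Tay f a (S n) x.
Proof. intros Hc Hx _. unfold Tay. simpl.
  assert (0 <= sumR n (fun k => coef f a k * (a - x) ^ k)).
  { apply sumR_nonneg. intros. apply Rmult_le_pos; auto. apply pow_le; lra. } lra. Qed.

Lemma strictCM (phi : R -> R) (f : nat -> R -> R) :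
  (forall x, 0 < x -> f 0%nat x = phi x) ->
  (forall n x, 0 < x -> derivable_pt_lim (f n) x (f (S n) x)) ->
  (forall n x, 0 < x -> 0 <= (-1) ^ n * f n x) ->
  (forall eps, 0 < eps -> exists delta, 0 < delta /\ forall x, 0 <= x < delta -> Rabs (phi x - phi 0) < eps) ->
  phi 0 = 1 ->
  (forall eps, 0 < eps -> exists M, forall x, M <= x -> Rabs (phi x) < eps) ->
  forall m b, 0 < b -> 0 < (-1) ^ m * f m b.
Proof. intros Hf0 Hd Hs Hc H0 Hlim m b Hb.
  destruct (Rlt_dec 0 ((-1) ^ m * f m b)) as [|Hn]; auto. exfalso.
  assert (Hz : (-1) ^ m * f m b = 0) by (assert (H := Hs m b Hb); lra).
  assert (S1 : forall t, b < t -> f m t = 0).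
  { intros t Ht. assert (Hg : (-1) ^ m * f m t <= (-1) ^ m * f m b).
    { apply (decr_lemma (fun s => (-1) ^ m * f m s) (fun s => (-1) ^ m * f (S m) s) b t). lra.
      intros s Hs0. apply (derivable_pt_lim_scal (f m) ((-1) ^ m)). apply Hd; lra.
      intros s Hs0. assert (H := Hs (S m) s ltac:(lra)).
      assert (H' : (-1)^(S m) * f (S m) s = - ((-1)^m * f (S m) s)) by (simpl; ring). lra. }
    assert (H := Hs m t ltac:(lra)).
    assert ((-1) ^ m * f m t = 0) by lra.
    assert ((-1) ^ m <> 0) by (apply pow_nonzero; lra).
    apply Rmult_integral in H1. destruct H1; auto. contradiction. }
  assert (S2 : forall j t, (m <= j)%nat -> b < t -> f j t = 0).
  { intros j t Hj. revert t. induction Hj. auto. intros t Ht.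
    apply (uniqueness_limite (f m0) t). apply Hd; lra. apply (deriv_zero_loc _ b); auto.
    }
  destruct (Hlim (/ 2 ^ m) ltac:(apply Rinv_0_lt_compat, pow_lt; lra)) as [M HM].
  set (c := 2 * Rmax M (b + 1)).
  assert (HR1 : M <= Rmax M (b + 1)) by apply Rmax_l.
  assert (HR2 : b + 1 <= Rmax M (b + 1)) by apply Rmax_r.
  assert (Hcpos : 0 < c) by (unfold c; lra).
  assert (Hcb : b < c) by (unfold c; lra).
  assert (Hd' : forall n t, 0 < t -> derivable_pt_lim (f n) t (f (S n) t)) by auto.
  assert (Hs' : forall n t, 0 < t <= c -> 0 <= (-1) ^ n * f n t) by (intros; apply Hs; lra).
  assert (Hc' : forall eps, 0 < eps -> exists delta, 0 < delta /\ forall x, 0 < x < delta -> Rabs (f 0%nat x - 1) < eps).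
  { intros e He. destruct (Hc e He) as [d [Hd0 Hdd]]. exists d. split; auto. intros x Hx.
    rewrite Hf0, <- H0 by lra. apply Hdd; lra. }
  assert (Hcv := Tay0_cv f c Hcpos Hd' Hs' 1 Hc').
  assert (Hcoef0 : forall j, (m <= j)%nat -> coef f c j = 0).
  { intros j Hj. unfold coef. rewrite (S2 j c Hj Hcb). unfold Rdiv; ring. }
  assert (E1 : Tay f c m 0 = 1).
  { apply (cv_eventually_const _ _ m Hcv). intros n Hnm. induction Hnm; auto.
    unfold Tay in *. simpl. rewrite IHHnm, Hcoef0 by lia. ring. }
  assert (Hph : Rabs (phi (c / 2)) < / 2 ^ m) by (apply HM; unfold c; lra).
  assert (Hbnd : forall j, coef f c j * (c - 0) ^ j <= 2 ^ j * phi (c / 2)).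
  { intros j. assert (H1 := Tay_term f c j (c / 2) (coef_nonneg f c Hcpos Hs') ltac:(lra) ltac:(lia)).
    assert (H2 := R1 f c Hd' Hs' (S j) (c / 2) ltac:(lra)). rewrite Hf0 in H2 by lra.
    replace (c - 0) with (2 * (c - c / 2)) by field. rewrite Rpow_mult_distr.
    assert (0 <= 2 ^ j) by (apply pow_le; lra). nra. }
  assert (E2 : Tay f c m 0 <= sumR m (fun j => 2 ^ j) * phi (c / 2)).
  { unfold Tay. rewrite Rmult_comm, <- sumR_scal. apply sumR_le. intros. assert (Hb2 := Hbnd i). lra. }
  rewrite sum_pow2, E1 in E2.
  assert (Hp0 : 0 <= phi (c / 2)). { rewrite <- Hf0 by lra. assert (H := Hs 0%nat (c/2) ltac:(lra)). simpl in H; lra. }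
  rewrite Rabs_right in Hph by lra.
  assert (0 < 2 ^ m) by (apply pow_lt; lra).
  assert (2 ^ m * phi (c / 2) < 1).
  { apply (Rmult_lt_compat_l (2 ^ m)) in Hph; auto. rewrite Rinv_r in Hph; lra. }
  nra.
Qed.

Fixpoint Pk (p : R) (k : nat) : R := match k with O => 1 | S k' => Pk p k' * (p - INR k') end.

Definition fp (L p : R) (k : nat) (t : R) : R :=
  match k with O => Rpower L p - Rpower t p | S _ => - Pk p k * Rpower t (p - INR k) end.

Lemma fp_deriv L p k t : 0 < t -> derivable_pt_lim (fp L p k) t (fp L p (S k) t).
Proof. intros Ht. destruct k.
  - simpl. eapply dpl_ext; [| |apply (derivable_pt_lim_minus (fct_cte (Rpower L p)) (fun x => Rpower x p))].
    intros; reflexivity. 2: apply derivable_pt_lim_const. 2: apply derivable_pt_lim_power; auto. simpl. ring.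
  - unfold fp. eapply dpl_ext; [| |apply (derivable_pt_lim_scal (fun x => Rpower x (p - INR (S k))) (- Pk p (S k)))].
    intros; reflexivity. 2: apply derivable_pt_lim_power; auto.
    change (Pk p (S (S k))) with (Pk p (S k) * (p - INR (S k))).
    replace (p - INR (S (S k))) with (p - INR (S k) - 1) by (rewrite (S_INR (S k)); ring). ring.
Qed.

Lemma Pk_sign p k : 0 < p <= 1 -> 0 <= (-1) ^ k * Pk p (S k).
Proof. intros Hp. induction k. simpl. lra.
  change (Pk p (S (S k))) with (Pk p (S k) * (p - INR (S k))).
  assert (1 <= INR (S k)) by (rewrite S_INR; assert (0 <= INR k) by apply pos_INR; lra).
  replace ((-1) ^ S k * (Pk p (S k) * (p - INR (S k)))) with (((-1) ^ k * Pk p (S k)) * (INR (S k) - p)) by (simpl; ring).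
  apply Rmult_le_pos; lra. Qed.

Lemma fp_sign L p k t : 0 < p <= 1 -> 0 < t <= L -> 0 <= (-1) ^ k * fp L p k t.
Proof. intros Hp Ht. destruct k.
  - simpl. assert (Rpower t p <= Rpower L p) by (apply Rle_Rpower_l; lra). lra.
  - unfold fp. assert (H := Pk_sign p k Hp). assert (0 < Rpower t (p - INR (S k))) by (unfold Rpower; apply exp_pos).
    replace ((-1) ^ S k * (- Pk p (S k) * Rpower t (p - INR (S k)))) with (((-1) ^ k * Pk p (S k)) * Rpower t (p - INR (S k))) by (simpl; ring).
    apply Rmult_le_pos; lra. Qed.

Lemma abspow_nonneg t p : 0 <= abspow t p.
Proof. unfold abspow. destruct Req_EM_T. lra. left; unfold Rpower; apply exp_pos. Qed.

Lemma abspow_pos t p : t <> 0 -> 0 < abspow t p.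
Proof. unfold abspow. destruct Req_EM_T. intros; contradiction. intros; unfold Rpower; apply exp_pos. Qed.

Lemma abspow_zero p : abspow 0 p = 0.
Proof. unfold abspow. destruct Req_EM_T; auto. contradiction. Qed.

Lemma abspow_opp t p : abspow (- t) p = abspow t p.
Proof. unfold abspow. destruct (Req_EM_T (-t) 0); destruct (Req_EM_T t 0); try lra. rewrite Rabs_Ropp; auto. Qed.

Lemma abspow_le t p L : 0 < p -> Rabs t <= L -> abspow t p <= Rpower L p.
Proof. intros Hp H. unfold abspow. destruct Req_EM_T. left; unfold Rpower; apply exp_pos.
  apply Rle_Rpower_l. lra. split; auto. apply Rabs_pos_lt; auto. Qed.

Lemma fp_taylor L p t : 0 < L -> 0 < p <= 1 -> Rabs t <= L ->
  Un_cv (fun N => Tay (fp L p) L N (Rabs t)) (Rpower L p - abspow t p).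
Proof. intros HL Hp Ht.
  assert (Hd : forall n t, 0 < t -> derivable_pt_lim (fp L p n) t (fp L p (S n) t)) by (intros; apply fp_deriv; auto).
  assert (Hs : forall n t, 0 < t <= L -> 0 <= (-1) ^ n * fp L p n t) by (intros; apply fp_sign; auto).
  destruct (Req_dec t 0).
  - subst. rewrite Rabs_R0, abspow_zero, Rminus_0_r.
    apply (Tay0_cv (fp L p) L HL Hd Hs). intros e He.
    exists (Rpower e (/ p)). split. unfold Rpower; apply exp_pos.
    intros x Hx. simpl. replace (Rpower L p - Rpower x p - Rpower L p) with (- Rpower x p) by ring.
    rewrite Rabs_Ropp, Rabs_right by (left; unfold Rpower; apply exp_pos).
    replace e with (Rpower (Rpower e (/ p)) p). apply Rlt_Rpower_l; lra.
    rewrite Rpower_mult. rewrite Rinv_l by lra. apply Rpower_1; auto.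
  - replace (Rpower L p - abspow t p) with (fp L p 0 (Rabs t)).
    apply (Tay_cv (fp L p) L HL Hd Hs). split; auto. apply Rabs_pos_lt; auto.
    simpl. unfold abspow. destruct Req_EM_T; [contradiction|auto].
Qed.

Lemma sumR_term n f i : (forall j, (j<n)%nat -> 0 <= f j) -> (i < n)%nat -> f i <= sumR n f.
Proof. induction n; intros H Hi; [lia|simpl].
  assert (0 <= sumR n f) by (apply sumR_nonneg; intros; apply H; lia).
  assert (0 <= f n) by (apply H; lia).
  destruct (Nat.eq_dec i n). subst; lra. assert (f i <= sumR n f) by (apply IHn; auto; lia). lra. Qed.

Lemma QF_cv n (K : nat -> nat -> nat -> R) (Ki : nat -> nat -> R) x :
  (forall i j, (i<n)%nat -> (j<n)%nat -> Un_cv (fun N => K N i j) (Ki i j)) ->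
  Un_cv (fun N => QF n (K N) x) (QF n Ki x).
Proof. intros H. unfold QF. apply (CV_sumR n (fun N i => sumR n (fun j => x i * x j * K N i j))).
  intros i Hi. apply (CV_sumR n (fun N j => x i * x j * K N i j)). intros j Hj.
  apply (CV_mult (fun _ => x i * x j)). apply CV_const. apply H; auto. Qed.

Lemma QF_sum n M (G : nat -> nat -> nat -> R) x :
  QF n (fun i j => sumR M (fun m => G m i j)) x = sumR M (fun m => QF n (G m) x).
Proof. unfold QF.
  transitivity (sumR n (fun i => sumR M (fun m => sumR n (fun j => x i * x j * G m i j)))).
  - apply sumR_ext; intros i Hi.
    rewrite (sumR_ext n _ (fun j => sumR M (fun m => x i * x j * G m i j))). apply sumR_swap.
    intros; rewrite <- sumR_scal; auto.
  - apply (sumR_swap n M). Qed.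

Lemma QF_scal n c G x : QF n (fun i j => c * G i j) x = c * QF n G x.
Proof. unfold QF. rewrite <- sumR_scal. apply sumR_ext. intros i Hi.
  rewrite <- sumR_scal. apply sumR_ext. intros j Hj. ring. Qed.

Lemma QF_delta n x : QF n (fun i j => if Nat.eq_dec i j then 1 else 0) x = sumR n (fun i => x i * x i).
Proof. unfold QF. apply sumR_ext. intros i Hi.
  rewrite (sumR_ext n _ (fun j => if Nat.eq_dec i j then x i * x j else 0)).
  apply (sumR_single n i (fun j => x i * x j)); auto.
  intros j Hj. destruct (Nat.eq_dec i j); ring. Qed.

Section Main.
Variable phi : R -> R.
Variable f : nat -> R -> R.
Variable p : R.
Variable D n : nat.
Variable theta : nat -> nat -> R.
Hypothesis Hf0 : forall x, 0 < x -> f 0%nat x = phi x.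
Hypothesis Hfd : forall n x, 0 < x -> derivable_pt_lim (f n) x (f (S n) x).
Hypothesis Hfs : forall n x, 0 < x -> 0 <= (-1) ^ n * f n x.
Hypothesis Hc : forall eps, 0 < eps -> exists delta, 0 < delta /\ forall x, 0 <= x < delta -> Rabs (phi x - phi 0) < eps.
Hypothesis H0 : phi 0 = 1.
Hypothesis Hlim : forall eps, 0 < eps -> exists M, forall x, M <= x -> Rabs (phi x) < eps.
Hypothesis Hp : 0 < p <= 1.
Hypothesis Hdist : forall l l', (l < n)%nat -> (l' < n)%nat -> l <> l' ->
        exists d, (d < D)%nat /\ theta l d <> theta l' d.

Definition dd i j := pnormp p D (vsub (theta j) (theta i)).
Definition Bnd := sumR D (fun c => sumR n (fun i => Rabs (theta i c))).
Definition LL := 2 * Bnd + 1.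
Definition aa := sumR D (fun _ => Rpower LL p).

Lemma Bnd_ge i c : (i < n)%nat -> (c < D)%nat -> Rabs (theta i c) <= Bnd.
Proof. intros. unfold Bnd. eapply Rle_trans; [|apply (sumR_term D _ c)]; auto.
  apply (sumR_term n (fun i => Rabs (theta i c))); auto. intros; apply Rabs_pos.
  intros; apply sumR_nonneg; intros; apply Rabs_pos. Qed.

Lemma Bnd_nonneg : 0 <= Bnd.
Proof. unfold Bnd; apply sumR_nonneg; intros; apply sumR_nonneg; intros; apply Rabs_pos. Qed.

Lemma LL_pos : 0 < LL.
Proof. unfold LL; assert (H := Bnd_nonneg); lra. Qed.

Lemma diff_le i j c : (i < n)%nat -> (j < n)%nat -> (c < D)%nat -> Rabs (theta j c - theta i c) <= LL.
Proof. intros Hi Hj Hcd. assert (H2 := Bnd_ge i c Hi Hcd). assert (H3 := Bnd_ge j c Hj Hcd).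
  unfold LL. unfold Rabs in *; repeat destruct Rcase_abs; lra. Qed.

Definition WW N i j := sumR D (fun c => Tay (fp LL p) LL N (Rabs (theta j c - theta i c))).

Lemma Hsfp : forall n t, 0 < t <= LL -> 0 <= (-1) ^ n * fp LL p n t.
Proof. intros; apply fp_sign; auto. Qed.

Lemma WW_Gram N : Gram n (WW N).
Proof. unfold WW. apply Gram_sumR. intros c Hc'. unfold Tay. apply Gram_sumR. intros k Hk.
  apply Gram_scal. apply coef_nonneg. apply LL_pos. apply Hsfp.
  apply Gram_pow. apply (Gram_ext n (fun i j => LL - Rabs (theta i c - theta j c))).
  intros; rewrite Rabs_minus_sym; auto.
  apply (Gram_abs n (fun i => theta i c) Bnd LL). intros; apply Bnd_ge; auto. unfold LL; lra. Qed.

Lemma aa_dd i j : aa - dd i j = sumR D (fun c => Rpower LL p - abspow (theta j c - theta i c) p).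
Proof. unfold aa, dd, pnormp, vsub.
  rewrite (sumR_ext D (fun c => Rpower LL p - abspow (theta j c - theta i c) p) (fun c => Rpower LL p + - abspow (theta j c - theta i c) p)) by (intros; ring).
  rewrite sumR_plus, sumR_opp. ring. Qed.

Lemma WW_cv i j : (i < n)%nat -> (j < n)%nat -> Un_cv (fun N => WW N i j) (aa - dd i j).
Proof. intros Hi Hj. rewrite aa_dd. unfold WW.
  apply (CV_sumR D (fun N c => Tay (fp LL p) LL N (Rabs (theta j c - theta i c)))).
  intros c Hc'. apply fp_taylor; auto. apply LL_pos. apply diff_le; auto. Qed.

Lemma dd_nonneg i j : 0 <= dd i j.
Proof. unfold dd, pnormp. apply sumR_nonneg. intros; apply abspow_nonneg. Qed.

Lemma dd_le i j : (i < n)%nat -> (j < n)%nat -> dd i j <= aa.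
Proof. intros Hi Hj. unfold dd, aa, pnormp. apply sumR_le. intros c Hc'. apply abspow_le. lra.
  apply diff_le; auto. Qed.

Lemma dd_diag i : dd i i = 0.
Proof. unfold dd, pnormp, vsub. rewrite (sumR_ext D _ (fun _ => 0)). apply sumR_zero.
  intros. replace (theta i i0 - theta i i0) with 0 by ring. apply abspow_zero. Qed.

Lemma dd_pos i j : (i < n)%nat -> (j < n)%nat -> i <> j -> 0 < dd i j.
Proof. intros Hi Hj Hij. destruct (Hdist i j Hi Hj Hij) as [c [Hc' Hne]].
  unfold dd, pnormp, vsub. apply (sumR_pos D _ c); auto. intros; apply abspow_nonneg.
  apply abspow_pos. lra. Qed.

Hypothesis HD : (1 <= D)%nat.
Lemma aa_pos : 0 < aa.
Proof. unfold aa. apply (sumR_pos D _ 0). intros; left; unfold Rpower; apply exp_pos. lia.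
  unfold Rpower; apply exp_pos. Qed.


Lemma Hfs_a : forall n t, 0 < t <= aa -> 0 <= (-1) ^ n * f n t.
Proof. intros; apply Hfs; lra. Qed.

Lemma phi_tay i j : (i < n)%nat -> (j < n)%nat -> Un_cv (fun M => Tay f aa M (dd i j)) (phi (dd i j)).
Proof. intros Hi Hj. destruct (Req_dec (dd i j) 0) as [E|E].
  - rewrite E. apply (Tay0_cv f aa aa_pos Hfd Hfs_a). intros e He. destruct (Hc e He) as [d [Hd Hdd]].
    exists d. split; auto. intros y Hy. rewrite Hf0 by lra. apply Hdd; lra.
  - rewrite <- Hf0. apply (Tay_cv f aa aa_pos Hfd Hfs_a). split. assert (H := dd_nonneg i j); lra.
    apply dd_le; auto. assert (H := dd_nonneg i j); lra. Qed.

Definition qq m x := QF n (fun i j => (aa - dd i j) ^ m) x.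

Lemma qq_nonneg m x : 0 <= qq m x.
Proof. apply (CV_nonneg (fun N => QF n (fun i j => (WW N i j) ^ m) x)).
  intros N. apply Gram_QF. apply Gram_pow. apply WW_Gram.
  unfold qq. apply (QF_cv n (fun N i j => (WW N i j) ^ m)). intros i j Hi Hj. apply CV_pow. apply WW_cv; auto. Qed.

Lemma QF_phi_cv x : Un_cv (fun M => sumR M (fun m => coef f aa m * qq m x)) (QF n (fun i j => phi (dd i j)) x).
Proof. apply (CV_ext (fun M => QF n (fun i j => Tay f aa M (dd i j)) x)).
  - intros M. unfold Tay. rewrite QF_sum. apply sumR_ext. intros m _. unfold qq. apply QF_scal.
  - apply (QF_cv n (fun M i j => Tay f aa M (dd i j))). intros; apply phi_tay; auto. Qed.

Lemma main_nonneg x : 0 <= QF n (fun i j => phi (dd i j)) x.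
Proof. apply (CV_nonneg _ _ (fun M => sumR_nonneg M _ (fun m _ => Rmult_le_pos _ _ (coef_nonneg f aa aa_pos Hfs_a m) (qq_nonneg m x)))).
  apply QF_phi_cv. Qed.

Lemma main_pos x : (exists i, (i < n)%nat /\ x i <> 0) -> 0 < QF n (fun i j => phi (dd i j)) x.
Proof. intros [i0 [Hi0 Hx0]].
  set (SS := sumR n (fun i => x i * x i)).
  assert (HS : 0 < SS). { apply (sumR_pos n _ i0); auto. intros; apply Rle_0_sqr. assert (H := Rsqr_pos_lt (x i0) Hx0). unfold Rsqr in H; lra. }
  assert (Hr : Un_cv (fun m => QF n (fun i j => ((aa - dd i j) / aa) ^ m) x) SS).
  { unfold SS. rewrite <- QF_delta. apply (QF_cv n (fun m i j => ((aa - dd i j) / aa) ^ m)).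
    intros i j Hi Hj. destruct (Nat.eq_dec i j).
    - subst. rewrite dd_diag. apply (CV_ext (fun _ => 1)). intros. replace ((aa - 0) / aa) with 1. rewrite pow1; auto.
      field. assert (H := aa_pos); lra. apply CV_const.
    - assert (H1 := dd_pos i j Hi Hj n0). assert (H2 := dd_le i j Hi Hj). assert (H3 := aa_pos).
      assert (Hrho : Rabs ((aa - dd i j) / aa) < 1).
      { rewrite Rabs_right. apply (Rmult_lt_reg_r aa); auto. unfold Rdiv. rewrite Rmult_assoc, Rinv_l; lra.
        apply Rle_ge. apply Rmult_le_pos. lra. left; apply Rinv_0_lt_compat; lra. }
      intros e He. destruct (pow_lt_1_zero _ Hrho e He) as [N HN]. exists N. intros m Hm.
      unfold R_dist. rewrite Rminus_0_r. apply HN; auto. }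
  destruct (Hr (SS / 2) ltac:(lra)) as [K HK]. specialize (HK K (le_n K)). unfold R_dist in HK.
  apply Rabs_def2 in HK.
  assert (Hq : 0 < qq K x).
  { assert (E : QF n (fun i j => ((aa - dd i j) / aa) ^ K) x = (/ aa) ^ K * qq K x).
    { unfold qq. rewrite <- QF_scal. apply QF_ext. intros. unfold Rdiv. rewrite Rpow_mult_distr. ring. }
    assert (0 < (/ aa) ^ K) by (apply pow_lt, Rinv_0_lt_compat, aa_pos).
    assert (0 <= qq K x) by apply qq_nonneg. nra. }
  assert (Hb : 0 < coef f aa K).
  { unfold coef. apply Rdiv_lt_0_compat. apply (strictCM phi f); auto. apply aa_pos.
    apply lt_0_INR, lt_O_fact. }
  assert (0 < coef f aa K * qq K x) by nra.
  enough (coef f aa K * qq K x <= QF n (fun i j => phi (dd i j)) x) by lra.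
  apply (CV_le_eventually (fun M => sumR M (fun m => coef f aa m * qq m x)) _ (coef f aa K * qq K x) (S K)).
  - intros M HM. apply (sumR_term M (fun m => coef f aa m * qq m x)).
    intros; apply Rmult_le_pos. apply (coef_nonneg f aa aa_pos Hfs_a). apply qq_nonneg. lia.
  - apply QF_phi_cv.
Qed.

End Main.

Lemma re_sumC n g : re (sumC n g) = sumR n (fun l => re (g l)).
Proof. induction n; simpl; auto. rewrite IHn; auto. Qed.
Lemma im_sumC n g : im (sumC n g) = sumR n (fun l => im (g l)).
Proof. induction n; simpl; auto. rewrite IHn; auto. Qed.

Theorem mainTheorem4 (phi : R -> R) (p : R) (D : nat) :
  CMF phi ->
  phi 0 = 1 ->
  (forall eps, 0 < eps -> exists M, forall x, M <= x -> Rabs (phi x) < eps) ->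
  0 < p -> p <= 1 ->
  (1 <= D)%nat ->
  forall (k : nat) (theta : nat -> nat -> R) (c : nat -> Cplx),
    (1 <= k)%nat ->
    (forall l l', (l < k)%nat -> (l' < k)%nat -> l <> l' ->
        exists d, (d < D)%nat /\ theta l d <> theta l' d) ->
    (exists l, (l < k)%nat /\ c l <> C0) ->
    Cpos (sumC k (fun l => sumC k (fun l' =>
            Cmul (Cmul (Cconj (c l)) (c l'))
                 (Cofreal (phi (pnormp p D (vsub (theta l') (theta l)))))))).
Proof.
  intros [[f [Hf0 [Hfd Hfs]]] Hc] H0 Hlim Hp1 Hp2 HD k theta c Hk Hdist Hcnz.
  assert (Hp : 0 < p <= 1) by lra.
  set (A := fun i j => phi (dd p D theta i j)).
  assert (Asym : forall i j, A i j = A j i).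
  { intros. unfold A, dd, pnormp, vsub. f_equal. apply sumR_ext. intros.
    replace (theta i i0 - theta j i0) with (- (theta j i0 - theta i i0)) by ring. rewrite abspow_opp; auto. }
  assert (Nn : forall x, 0 <= QF k A x) by (intros; apply (main_nonneg phi f p D k theta); auto).
  assert (Ps : forall x, (exists i, (i < k)%nat /\ x i <> 0) -> 0 < QF k A x)
    by (intros; apply (main_pos phi f p D k theta); auto).
  split.
  - rewrite im_sumC. simpl.
    rewrite (sumR_ext k _ (fun l => sumR k (fun l' => re (c l) * im (c l') * A l l') - sumR k (fun l' => im (c l) * re (c l') * A l l'))).
    2:{ intros l Hl. rewrite im_sumC. simpl. unfold Rminus. rewrite <- sumR_opp, <- sumR_plus.
        apply sumR_ext. intros. unfold A, dd. ring. }
    unfold Rminus. rewrite sumR_plus, sumR_opp.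
    rewrite (sumR_swap k k (fun l l' => im (c l) * re (c l') * A l l')).
    rewrite (sumR_ext k (fun l' => sumR k (fun l => im (c l) * re (c l') * A l l'))
                       (fun l => sumR k (fun l' => re (c l) * im (c l') * A l l'))).
    ring. intros l Hl. apply sumR_ext. intros l' Hl'. rewrite Asym. ring.
  - rewrite re_sumC. simpl.
    rewrite (sumR_ext k _ (fun l => sumR k (fun l' => re (c l) * re (c l') * A l l') + sumR k (fun l' => im (c l) * im (c l') * A l l'))).
    2:{ intros l Hl. rewrite re_sumC. simpl. rewrite <- sumR_plus.
        apply sumR_ext. intros. unfold A, dd. ring. }
    rewrite sumR_plus. fold (QF k A (fun l => re (c l))). fold (QF k A (fun l => im (c l))).
    destruct Hcnz as [l [Hl Hcl]].
    assert (re (c l) <> 0 \/ im (c l) <> 0).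
    { destruct (Req_dec (re (c l)) 0); destruct (Req_dec (im (c l)) 0); auto.
      exfalso. apply Hcl. destruct (c l); simpl in *; subst; auto. }
    destruct H.
    + assert (0 < QF k A (fun l => re (c l))) by (apply Ps; exists l; auto).
      assert (H2 := Nn (fun l => im (c l))). lra.
    + assert (0 < QF k A (fun l => im (c l))) by (apply Ps; exists l; auto).
      assert (H2 := Nn (fun l => re (c l))). lra.
Qed.
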